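(* Let $\Gamma$ be a locally-finite simple geodetic graph. If $\rho$ is an embedded circuit in $\Gamma$ of diameter exceeding two which has minimal length among all embedded circuits in $\Gamma$ of diameter exceeding two, then $\rho$ contains a subpath of length three (four consecutive vertices of $\rho$) that is a geodesic in $\Gamma$.
   Context: A graph is geodetic if between any two vertices there is a unique shortest path (geodesic); $d$ is the path metric. A path $u_0,\dots,u_n$ is an embedded circuit of length $n$ if $u_0,\dots,u_{n-1}$ are distinct and $u_0=u_n$. The diameter of an embedded circuit is the maximum distance in $\Gamma$ between two of its vertices. *)

(* Defs.v *)
From Stdlib Require Import List Arith.
Import ListNotations.

Section Graph.
Context {V : Type} (adj : V -> V -> Prop).

Definition simple_graph : Prop :=
  (forall x y, adj x y -> adj y x) /\ (forall x, ~ adj x x).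

Definition locally_finite : Prop :=
  forall v, exists l : list V, forall w, adj v w -> In w l.

Fixpoint is_walk (l : list V) : Prop :=
  match l with
  | x :: ((y :: _) as t) => adj x y /\ is_walk t
  | _ => True
  end.

(* l = [u_0; ...; u_n] is a path (walk) from u to v; its length is n = length l - 1 *)
Definition walk_from_to (u v : V) (l : list V) : Prop :=
  exists t, l = u :: t /\ last l u = v /\ is_walk l.

Definition geodesic (u v : V) (l : list V) : Prop :=
  walk_from_to u v l /\
  forall l', walk_from_to u v l' -> length l <= length l'.

Definition dist (u v : V) (n : nat) : Prop :=
  exists l, geodesic u v l /\ length l = S n.

Definition geodetic : Prop :=
  forall u v, exists! l, geodesic u v l.

(* c = [u_0; ...; u_{n-1}] represents the embedded circuit u_0,...,u_{n-1},u_0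
   of length n = length c *)
Definition embedded_circuit (c : list V) : Prop :=
  exists u t, c = u :: t /\ NoDup c /\ is_walk (c ++ [u]).

Definition circuit_diameter_gt (c : list V) (k : nat) : Prop :=
  exists x y n, In x c /\ In y c /\ dist x y n /\ k < n.

(* c contains four cyclically consecutive vertices a,b,c,d whose subpath
   [a;b;c;d] is a geodesic of the graph *)
Definition has_geodesic_subpath3 (c : list V) : Prop :=
  exists l1 l2 a b c' d rest,
    c = l1 ++ l2 /\ l2 ++ l1 = a :: b :: c' :: d :: rest /\
    geodesic a d [a; b; c'; d].

End Graph.

(* Main.v *)
Require Import Defs.
From Stdlib Require Import List Arith Lia Classical.
Import ListNotations.

Section G.
Context {V : Type} (adj : V -> V -> Prop).
Hypothesis Hsym : forall x y, adj x y -> adj y x.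
Hypothesis Hirr : forall x, ~ adj x x.

Lemma is_walk_app l1 y l2 d :
  is_walk adj l1 -> is_walk adj (y :: l2) -> (l1 = [] \/ adj (last l1 d) y) ->
  is_walk adj (l1 ++ y :: l2).
Proof.
  induction l1 as [|a l1 IH]; intros H1 H2 H3; auto.
  destruct l1 as [|b l1'].
  - simpl in *. destruct H3 as [H3|H3]; [discriminate|]. split; auto.
  - destruct H1 as [Hab H1]. change (adj a b /\ is_walk adj ((b :: l1') ++ y :: l2)).
    split; auto. apply IH; auto. right. destruct H3 as [H3|H3]; [discriminate|]. exact H3.
Qed.

Lemma is_walk_tail x t : is_walk adj (x :: t) -> is_walk adj t.
Proof. destruct t; simpl; tauto. Qed.

Lemma is_walk_rev l : is_walk adj l -> is_walk adj (rev l).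
Proof.
  induction l as [|a t IH]; intros H; simpl; auto.
  apply is_walk_app with (d := a).
  - apply IH. eapply is_walk_tail; eauto.
  - simpl; auto.
  - destruct t as [|b t']; [left; reflexivity|]. right.
    simpl. rewrite last_last. destruct H as [H _]. auto.
Qed.

Lemma walk_rev p q l : walk_from_to adj q p l -> walk_from_to adj p q (rev l).
Proof.
  intros [t [Hl [Hlast Hw]]].
  assert (Hne : l <> []) by (subst; discriminate).
  pose proof (@app_removelast_last V l q Hne) as E.
  exists (rev (removelast l)). split; [|split].
  - rewrite E at 1. rewrite rev_app_distr. simpl. rewrite Hlast. reflexivity.
  - subst l. simpl. rewrite last_last. reflexivity.
  - apply is_walk_rev; auto.
Qed.

Definition far (p q : V) := forall l, walk_from_to adj p q l -> 4 <= length l.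

Lemma far_sym p q : far p q -> far q p.
Proof.
  intros H l Hl. apply walk_rev in Hl. apply H in Hl. rewrite length_rev in Hl. exact Hl.
Qed.

Lemma far_adj p q : far p q -> adj p q -> False.
Proof.
  intros H Ha. assert (4 <= length [p; q]); [|simpl in *; lia].
  apply H. exists [q]. simpl. auto.
Qed.

Lemma least_nat (P : nat -> Prop) k : P k -> exists k0, P k0 /\ forall k', P k' -> k0 <= k'.
Proof.
  revert P. induction k as [k IH] using lt_wf_ind. intros P Hk.
  destruct (classic (exists k', k' < k /\ P k')) as [[k' [Hlt Hk']]|Hn].
  - eapply IH; eauto.
  - exists k. split; auto. intros k' Hk'. destruct (le_lt_dec k k'); auto.
    exfalso; apply Hn; eauto.
Qed.

Lemma far_good p q l0 : far p q -> walk_from_to adj p q l0 ->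
  exists k, dist adj p q k /\ 2 < k.
Proof.
  intros Hf Hw.
  destruct (least_nat (fun k => exists l, walk_from_to adj p q l /\ length l = k) (length l0))
    as [k0 [[l [Hl Hlen]] Hmin]]; [eauto|].
  assert (H4 := Hf l Hl).
  exists (k0 - 1). split; [|lia].
  exists l. split; [|lia]. split; auto.
  intros l' Hl'. rewrite Hlen. apply Hmin. eauto.
Qed.

Lemma not_far_short p q : ~ far p q -> p = q \/ adj p q \/ exists w, adj p w /\ adj w q.
Proof.
  intros H. unfold far in H.
  apply not_all_ex_not in H. destruct H as [l H].
  apply imply_to_and in H. destruct H as [[t [Hl [Hlast Hw]]] Hlen].
  subst l. destruct t as [|a [|b [|c t]]]; simpl in *.
  - left; auto.
  - right; left. subst. tauto.
  - right; right. exists a. subst. tauto.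
  - lia.
Qed.

End G.
Section P.
Context {V : Type} (adj : V -> V -> Prop).
Hypothesis Hsym : forall x y, adj x y -> adj y x.
Hypothesis Hirr : forall x, ~ adj x x.
Variable n : nat.
Variable u : nat -> V.
Hypothesis Hn : 0 < n.
Hypothesis U1 : forall k, adj (u k) (u (S k)).
Hypothesis U2 : forall k, u (k + n) = u k.
Hypothesis U3 : forall a b, u a = u b -> a mod n = b mod n.
Hypothesis Hmin : forall sigma, embedded_circuit adj sigma -> circuit_diameter_gt adj sigma 2 ->
  n <= length sigma.

Lemma mod_window a b : a < b -> b < a + n -> a mod n <> b mod n.
Proof.
  intros H1 H2 E.
  pose proof (Nat.div_mod_eq a n). pose proof (Nat.div_mod_eq b n).
  destruct (le_lt_dec (b/n) (a/n)) as [L|L].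
  - assert (n*(b/n) <= n*(a/n)) by (apply Nat.mul_le_mono_l; auto). lia.
  - assert (n*(a/n) + n <= n*(b/n)) by nia. lia.
Qed.

Lemma inj_win s a b : s <= a -> a < s + n -> s <= b -> b < s + n -> u a = u b -> a = b.
Proof.
  intros H1 H2 H3 H4 E. apply U3 in E.
  destruct (lt_eq_lt_dec a b) as [[L|L]|L]; auto.
  - exfalso. eapply (mod_window a b); eauto; lia.
  - exfalso. eapply (mod_window b a); eauto; lia.
Qed.

Lemma u_eq a b : a = b -> u a = u b.
Proof. intros; subst; auto. Qed.

Lemma u_per a b : a = b + n -> u a = u b.
Proof. intros; subst; auto. Qed.

Lemma nodup_map_inj (l : list nat) :
  (forall a b, In a l -> In b l -> u a = u b -> a = b) -> NoDup l -> NoDup (map u l).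
Proof.
  induction l as [|a l IH]; intros Hi Hd; simpl; constructor.
  - intros Hin. apply in_map_iff in Hin. destruct Hin as [b [Hb Hin]].
    inversion Hd; subst. assert (b = a) by (apply Hi; simpl; auto). subst; auto.
  - inversion Hd; subst. apply IH; auto. intros; apply Hi; simpl; auto.
Qed.

Lemma win_nodup a L : L <= n -> NoDup (map u (seq a L)).
Proof.
  intros HL. apply nodup_map_inj; [|apply seq_NoDup].
  intros x y Hx Hy E. apply in_seq in Hx, Hy. apply (inj_win a); auto; lia.
Qed.

Lemma win_in a L k x : a <= k -> k < a + L -> u k = x -> In x (map u (seq a L)).
Proof. intros; subst. apply in_map. apply in_seq. lia. Qed.

Lemma win_in_inv a L w : In w (map u (seq a L)) -> exists k, a <= k < a + L /\ w = u k.
Proof. intros H. apply in_map_iff in H. destruct H as [k [Hk Hin]]. apply in_seq in Hin. eauto. Qed.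

Lemma win_is_walk L a : is_walk adj (map u (seq a L)).
Proof.
  revert a. induction L as [|L IH]; intros a; simpl; auto.
  destruct L; simpl; auto. split; [apply U1|]. specialize (IH (S a)). simpl in IH. exact IH.
Qed.

Lemma win_last a L d : last (map u (seq a (S L))) d = u (a + L).
Proof. rewrite seq_S, map_app. simpl. rewrite last_last. reflexivity. Qed.

Lemma win_walk a L : walk_from_to adj (u a) (u (a + L)) (map u (seq a (S L))).
Proof.
  exists (map u (seq (S a) L)). split; [reflexivity|]. split.
  - apply win_last.
  - apply win_is_walk.
Qed.

Lemma far_len a L : far adj (u a) (u (a + L)) -> 3 <= L.
Proof.
  intros H. specialize (H _ (win_walk a L)). rewrite length_map, length_seq in H. lia.
Qed.

Lemma circ_chord a L : S L <= n -> adj (u (a + L)) (u a) ->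
  embedded_circuit adj (map u (seq a (S L))).
Proof.
  intros HL Ha. exists (u a), (map u (seq (S a) L)). split; [reflexivity|]. split.
  - apply win_nodup; auto.
  - apply is_walk_app with (d := u a).
    + apply win_is_walk.
    + simpl; auto.
    + right. rewrite win_last. auto.
Qed.

Lemma circ_detour a L w : S L <= n -> ~ In w (map u (seq a (S L))) ->
  adj w (u a) -> adj (u (a + L)) w ->
  embedded_circuit adj (w :: map u (seq a (S L))).
Proof.
  intros HL Hw H1 H2. exists w, (map u (seq a (S L))). split; [reflexivity|]. split.
  - constructor; auto. apply win_nodup; auto.
  - change (is_walk adj ((w :: map u (seq a (S L))) ++ [w])).
    apply is_walk_app with (d := w).
    + change (is_walk adj ([w] ++ u a :: map u (seq (S a) L))).
      apply is_walk_app with (d := w).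
      * simpl; auto.
      * apply (win_is_walk (S L) a).
      * right. simpl. auto.
    + simpl; auto.
    + right. assert (Hl : last (w :: map u (seq a (S L))) w = u (a + L))
        by (rewrite <- (win_last a L w); reflexivity).
      rewrite Hl. auto.
Qed.

Lemma core : forall m s, far adj (u s) (u (s + m)) -> exists i, far adj (u i) (u (i + 3)).
Proof.
  intros m. induction m as [m IH] using lt_wf_ind. intros s Hf.
  assert (Hm3 : 3 <= m) by (eapply far_len; eauto).
  destruct (Nat.eq_dec m 3) as [->|Hm3']. { exists s; exact Hf. }
  destruct (le_lt_dec n m) as [Hnm|Hmn].
  { apply (IH (m - n)) with s; [lia|].
    rewrite <- (u_per (s + m) (s + (m - n))) by lia. exact Hf. }
  destruct (lt_dec n (2*m)) as [H2|H2].
  { apply (IH (n - m)) with (s + m); [lia|].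
    rewrite (u_per (s + m + (n - m)) s) by lia. apply far_sym; auto. }
  assert (Hgood : exists k, dist adj (u s) (u (s+m)) k /\ 2 < k)
    by (eapply far_good; [exact Hf| apply (win_walk)]).
  assert (Hshort : forall sg, embedded_circuit adj sg -> In (u s) sg -> In (u (s+m)) sg ->
            length sg < n -> False).
  { intros sg He Hx Hy Hl. assert (n <= length sg); [|lia]. apply Hmin; auto.
    destruct Hgood as [k [Hd Hk]]. exists (u s), (u (s+m)), k. auto. }
  assert (Us : u (s + n) = u s) by apply U2.
  assert (Us1 : u (s + n + 1) = u (s + 1)) by (apply (u_per); lia).
  assert (Usm : u (s + n + m) = u (s + m)) by (apply (u_per); lia).
  destruct (classic (far adj (u s) (u (s + (m-1))))) as [Hf1|Hnf1].
  { apply (IH (m-1)) with s; [lia|exact Hf1]. }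
  destruct (classic (far adj (u (s+1)) (u (s+1 + (m-1))))) as [Hf2|Hnf2].
  { apply (IH (m-1)) with (s+1); [lia|exact Hf2]. }
  exfalso.
  replace (s + (m-1)) with (s + m - 1) in Hnf1 by lia.
  replace (s + 1 + (m-1)) with (s + m) in Hnf2 by lia.
  assert (B1 : adj (u (s + n - 1)) (u (s + m - 1))).
  { apply not_far_short in Hnf1. destruct Hnf1 as [Heq|[Hadj|[w [H1 H3]]]].
    - exfalso. apply (inj_win s) in Heq; lia.
    - exfalso. pose proof (circ_chord (s + m - 1) (n - m + 1)) as He.
      replace (s + m - 1 + (n - m + 1)) with (s + n) in He by lia. rewrite Us in He.
      apply (Hshort _ (He ltac:(lia) ltac:(auto))).
      + apply (win_in (s+m-1) _ (s + n)); auto; lia.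
      + apply (win_in (s+m-1) _ (s + m)); auto; lia.
      + rewrite length_map, length_seq. lia.
    - destruct (classic (exists t, m - 1 <= t <= n /\ w = u (s + t))) as [[t [Ht Hw]]|Hnw].
      + subst w.
        destruct (Nat.eq_dec t (m-1)).
        { exfalso. subst t. replace (s + (m-1)) with (s + m - 1) in H3 by lia. eapply Hirr; eauto. }
        destruct (Nat.eq_dec t n).
        { exfalso. subst t. rewrite Us in H1. eapply Hirr; eauto. }
        destruct (Nat.eq_dec t m).
        { exfalso. subst t. eapply far_adj; eauto. }
        destruct (Nat.eq_dec t (n-1)).
        { subst t. replace (s + (n-1)) with (s + n - 1) in H3 by lia. exact H3. }
        exfalso. pose proof (circ_chord s t) as He.
        apply (Hshort _ (He ltac:(lia) ltac:(auto))).
        * apply (win_in s _ s); auto; lia.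
        * apply (win_in s _ (s + m)); auto; lia.
        * rewrite length_map, length_seq. lia.
      + exfalso. pose proof (circ_detour (s + m - 1) (n - m + 1) w) as He.
        replace (s + m - 1 + (n - m + 1)) with (s + n) in He by lia. rewrite Us in He.
        refine (Hshort _ (He ltac:(lia) _ ltac:(auto) ltac:(auto)) _ _ _).
        * intros Hin. apply (win_in_inv) in Hin. destruct Hin as [k [Hk Hwk]].
          apply Hnw. exists (k - s). split; [lia|]. rewrite Hwk. apply u_eq. lia.
        * right. apply (win_in (s+m-1) _ (s + n)); auto; lia.
        * right. apply (win_in (s+m-1) _ (s + m)); auto; lia.
        * simpl. rewrite length_map, length_seq. lia. }
  assert (B2 : adj (u (s + 1)) (u (s + m + 1))).
  { apply not_far_short in Hnf2. destruct Hnf2 as [Heq|[Hadj|[w [H1 H3]]]].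
    - exfalso. apply (inj_win s) in Heq; lia.
    - exfalso. pose proof (circ_chord (s + m) (n - m + 1)) as He.
      replace (s + m + (n - m + 1)) with (s + n + 1) in He by lia. rewrite Us1 in He.
      apply (Hshort _ (He ltac:(lia) ltac:(auto))).
      + apply (win_in (s+m) _ (s + n)); auto; lia.
      + apply (win_in (s+m) _ (s + m)); auto; lia.
      + rewrite length_map, length_seq. lia.
    - destruct (classic (exists t, m <= t <= n + 1 /\ w = u (s + t))) as [[t [Ht Hw]]|Hnw].
      + subst w.
        destruct (Nat.eq_dec t m).
        { exfalso. subst t. eapply Hirr; eauto. }
        destruct (Nat.eq_dec t (n+1)).
        { exfalso. subst t. replace (s + (n+1)) with (s + n + 1) in H1 by lia.
          rewrite Us1 in H1. eapply Hirr; eauto. }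
        destruct (Nat.eq_dec t n).
        { exfalso. subst t. rewrite Us in H3. eapply far_adj; eauto. }
        destruct (Nat.eq_dec t (m+1)).
        { subst t. replace (s + (m+1)) with (s + m + 1) in H1 by lia. exact H1. }
        exfalso. pose proof (circ_chord (s + t) (n + m - t)) as He.
        replace (s + t + (n + m - t)) with (s + n + m) in He by lia. rewrite Usm in He.
        apply (Hshort _ (He ltac:(lia) ltac:(auto))).
        * apply (win_in (s+t) _ (s + n)); auto; lia.
        * apply (win_in (s+t) _ (s + n + m)); auto; lia.
        * rewrite length_map, length_seq. lia.
      + exfalso. pose proof (circ_detour (s + m) (n - m + 1) w) as He.
        replace (s + m + (n - m + 1)) with (s + n + 1) in He by lia. rewrite Us1 in He.
        refine (Hshort _ (He ltac:(lia) _ ltac:(auto) ltac:(auto)) _ _ _).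
        * intros Hin. apply (win_in_inv) in Hin. destruct Hin as [k [Hk Hwk]].
          apply Hnw. exists (k - s). split; [lia|]. rewrite Hwk. apply u_eq. lia.
        * right. apply (win_in (s+m) _ (s + n)); auto; lia.
        * right. apply (win_in (s+m) _ (s + m)); auto; lia.
        * simpl. rewrite length_map, length_seq. lia. }
  set (l := [s; s + 1; s + m + 1; s + m; s + m - 1; s + n - 1]).
  assert (Hnd : NoDup (map u l)).
  { apply nodup_map_inj.
    - intros a b Ha Hb E. apply (inj_win s); auto;
      unfold l in Ha, Hb; simpl in Ha, Hb; intuition lia.
    - unfold l. repeat constructor; simpl; intuition lia. }
  assert (Hlast : adj (u (s + n - 1)) (u s)).
  { rewrite <- Us. rewrite (u_eq (s + n) (S (s + n - 1))) by lia. apply U1. }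
  assert (Ha1 : adj (u (s + m + 1)) (u (s + m))).
  { apply Hsym. replace (s + m + 1) with (S (s + m)) by lia. apply U1. }
  assert (Ha2 : adj (u (s + m)) (u (s + m - 1))).
  { apply Hsym. rewrite (u_eq (s + m) (S (s + m - 1))) by lia. apply U1. }
  assert (Ha0 : adj (u s) (u (s + 1))).
  { replace (s + 1) with (S s) by lia. apply U1. }
  apply (Hshort (map u l)).
  - exists (u s), (map u (tl l)). split; [reflexivity|]. split; auto.
    unfold l. simpl. repeat split; auto.
  - unfold l; simpl; auto.
  - unfold l; simpl; auto 6.
  - unfold l; simpl. lia.
Qed.

End P.

Lemma is_walk_nth {V : Type} (adj : V -> V -> Prop) (l : list V) d i :
  is_walk adj l -> S i < length l -> adj (nth i l d) (nth (S i) l d).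
Proof.
  revert i. induction l as [|a l IH]; intros i Hw Hi; simpl in Hi; [lia|].
  destruct l as [|b l']; simpl in Hi; [lia|].
  destruct Hw as [Hab Hw]. destruct i as [|i].
  - simpl. exact Hab.
  - change (adj (nth i (b :: l') d) (nth (S i) (b :: l') d)). apply IH; auto. simpl; lia.
Qed.

Lemma rot_map {V : Type} (rho : list V) x0 r : r < length rho ->
  skipn r rho ++ firstn r rho =
  map (fun k => nth (k mod length rho) rho x0) (seq r (length rho)).
Proof.
  intros Hr. set (n := length rho) in *.
  apply nth_ext with (d := x0) (d' := x0).
  - rewrite length_app, length_skipn, length_firstn, length_map, length_seq. lia.
  - intros j Hj. rewrite length_app, length_skipn, length_firstn in Hj.
    set (f := fun k => nth (k mod n) rho x0).
    assert (E : nth j (map f (seq r n)) x0 = f (r + j)).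
    { rewrite (nth_indep _ x0 (f 0)) by (rewrite length_map, length_seq; lia).
      rewrite map_nth, seq_nth by lia. reflexivity. }
    rewrite E. unfold f.
    destruct (lt_dec j (n - r)).
    + rewrite app_nth1 by (rewrite length_skipn; lia).
      rewrite nth_skipn. rewrite Nat.mod_small by lia. reflexivity.
    + rewrite app_nth2 by (rewrite length_skipn; lia).
      rewrite nth_firstn, length_skipn.
      fold n. destruct (Nat.ltb_spec (j - (n - r)) r); [|lia].
      replace (r + j) with ((j - (n - r)) + 1 * n) by lia.
      rewrite Nat.Div0.mod_add, Nat.mod_small by lia. reflexivity.
Qed.

Theorem lemma6 (V : Type) (adj : V -> V -> Prop) :
  simple_graph adj -> locally_finite adj -> geodetic adj ->
  forall rho : list V,
    embedded_circuit adj rho ->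
    circuit_diameter_gt adj rho 2 ->
    (forall sigma : list V,
        embedded_circuit adj sigma -> circuit_diameter_gt adj sigma 2 ->
        length rho <= length sigma) ->
    has_geodesic_subpath3 adj rho.
Proof.
  intros [Hsym Hirr] _ _ rho [x0 [t [Hr [Hnd Hw]]]] [x [y [k [Hx [Hy [[l [[Hwl Hgeo] Hlen]] Hk]]]]]] Hmin.
  set (n := length rho) in *.
  assert (Hn : 0 < n) by (unfold n; rewrite Hr; simpl; lia).
  set (u := fun k => nth (k mod n) rho x0).
  assert (Umod : forall a b, a mod n = b mod n -> u a = u b).
  { intros a b E. unfold u. rewrite E. reflexivity. }
  assert (U1 : forall k, adj (u k) (u (S k))).
  { intros j. unfold u.
    assert (Hr1 : j mod n < n) by (apply Nat.mod_upper_bound; lia).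
    pose proof (is_walk_nth adj (rho ++ [x0]) x0 (j mod n) Hw) as HH.
    rewrite length_app in HH. simpl in HH. specialize (HH ltac:(fold n; lia)).
    rewrite app_nth1 in HH by (fold n; lia).
    replace (S j) with (j mod n + 1 + n * (j / n)) by (pose proof (Nat.div_mod_eq j n); lia).
    rewrite Nat.mul_comm, Nat.Div0.mod_add.
    destruct (lt_dec (S (j mod n)) n).
    - rewrite (Nat.mod_small (j mod n + 1)) by lia. rewrite app_nth1 in HH by (fold n; lia).
      rewrite Nat.add_1_r. exact HH.
    - replace (j mod n + 1) with n by lia. rewrite Nat.Div0.mod_same.
      rewrite app_nth2 in HH by (fold n; lia). fold n in HH.
      replace (S (j mod n) - n) with 0 in HH by lia. simpl in HH.
      rewrite Hr at 2. simpl. exact HH. }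
  assert (U2 : forall k, u (k + n) = u k).
  { intros j. apply Umod. replace (j + n) with (j + 1 * n) by lia. apply Nat.Div0.mod_add. }
  assert (U3 : forall a b, u a = u b -> a mod n = b mod n).
  { intros a b E. unfold u in E. apply (NoDup_nth rho x0) in E; auto;
    apply Nat.mod_upper_bound; lia. }
  assert (Hfar : far adj x y).
  { intros l' Hl'. specialize (Hgeo l' Hl'). lia. }
  apply (In_nth rho x x0) in Hx. destruct Hx as [a [Ha Hxa]].
  apply (In_nth rho y x0) in Hy. destruct Hy as [b [Hb Hyb]].
  assert (Hua : u a = x) by (unfold u; rewrite Nat.mod_small; auto).
  assert (Hub : u (a + (b + n - a)) = y).
  { replace (a + (b + n - a)) with (b + n) by lia. rewrite U2. unfold u; rewrite Nat.mod_small; auto. }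
  rewrite <- Hua, <- Hub in Hfar.
  destruct (core adj Hsym Hirr n u Hn U1 U2 U3 Hmin _ _ Hfar) as [i Hi].
  assert (Hn4 : 4 <= n).
  { destruct (le_lt_dec 4 n); auto. exfalso.
    rewrite (u_per n u U2 (i + 3) (i + (3 - n))) in Hi by lia.
    apply (far_len adj n u Hn U1) in Hi. lia. }
  set (r := i mod n).
  assert (Hrn : r < n) by (apply Nat.mod_upper_bound; lia).
  pose proof (rot_map rho x0 r Hrn) as Hrot. fold n in Hrot. fold u in Hrot.
  exists (firstn r rho), (skipn r rho), (u r), (u (S r)), (u (S (S r))), (u (S (S (S r)))),
    (map u (seq (S (S (S (S r)))) (n - 4))).
  split; [symmetry; apply firstn_skipn|]. split; [rewrite Hrot; replace (seq r n) with (seq r (S (S (S (S (n - 4)))))) by (f_equal; lia); reflexivity|].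
  split.
  - exists [u (S r); u (S (S r)); u (S (S (S r)))]. split; [reflexivity|]. split; [reflexivity|].
    simpl. repeat split; apply U1.
  - intros l' Hl'. simpl.
    rewrite (Umod r i) in Hl' by (unfold r; apply Nat.Div0.mod_mod).
    rewrite (Umod (S (S (S r))) (i + 3)) in Hl'
      by (unfold r; rewrite <- Nat.Div0.add_mod_idemp_l; f_equal; lia).
    apply Hi; auto.
Qed.
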